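(* For all positive integers $b_1,\dots,b_s$ and $\gamma$, the series $\widetilde H_{b_1,\dots,b_s}(z)$, with coefficients reduced modulo $3^\gamma$, can be expressed as a linear combination with coefficients in $(\mathbb Z/3^\gamma\mathbb Z)[z,(1+z)^{-1}]$ of the series $1$ and of finitely many series $\widetilde H_{a_1,\dots,a_r}(z)$ ($r\ge1$) in which none of the $a_i$ is divisible by $3$.
   Context: For positive integers $a_1,\dots,a_r$, $$\widetilde H_{a_1,\dots,a_r}(z)=\sum_{k_1>\dots>k_r\ge0}\prod_{j=1}^{r}\left(\frac{z^{3^{k_j}}(1+z^{3^{k_j}})}{1+z^{3^{k_j+1}}}\right)^{a_j},$$ a formal power series in $z$ with integer coefficients (rational functions expanded as power series in $z$); $\widetilde H_{\emptyset}=1$. *)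

(* Defs.v *)
From HB Require Import structures.
From mathcomp Require Import all_boot all_order all_algebra.
Set Implicit Arguments. Unset Strict Implicit. Unset Printing Implicit Defensive.
Import Order.TTheory GRing.Theory Num.Theory.
Local Open Scope ring_scope.

Definition series (R : Type) := nat -> R.

Section Series.
Variable R : nzRingType.

Definition sone : series R := fun n => (n == 0%N)%:R.
Definition sprod (f g : series R) : series R :=
  fun n => \sum_(i < n.+1) f i * g (n - i)%N.
Definition spow (f : series R) (a : nat) : series R := iter a (sprod f) sone.
Definition spoly (p : {poly R}) : series R := fun n => p`_n.
(* the power series expansion of (1+z)^{-1} = sum_n (-1)^n z^n *)
Definition inv1pz : series R := fun n => (-1) ^+ n.
(* the element p(z) * (1+z)^{-m} of R[z,(1+z)^{-1}], as a power series *)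
Definition laur (c : {poly R} * nat) : series R :=
  sprod (spoly c.1) (spow inv1pz c.2).
End Series.

Definition red (gamma : nat) (f : series int) : series 'Z_(3 ^ gamma) :=
  fun n => (f n)%:~R.

(* t_k(z) = z^{3^k}(1+z^{3^k}) / (1+z^{3^{k+1}}), expanded as a power series:
   numerator z^{3^k} + z^{2*3^k} times 1/(1+z^{3^{k+1}}) = sum_j (-1)^j z^{j 3^{k+1}} *)
Definition tfac (k : nat) : series int :=
  sprod (fun n => ((n == 3 ^ k)%N + (n == 2 * 3 ^ k)%N)%:R)
        (fun n => if (3 ^ k.+1 %| n)%N then (-1) ^+ (n %/ 3 ^ k.+1) else 0).

(* Gt a K = sum_{K > k_1 > ... > k_r >= 0} prod_j t_{k_j}^{a_j}  (finite sum) *)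
Fixpoint Gt (a : seq nat) (K : nat) : series int :=
  match a with
  | [::] => sone int
  | a1 :: a' => fun n => \sum_(k < K) sprod (spow (tfac k) a1) (Gt a' k) n
  end.

(* Htilde a = sum_{k_1 > ... > k_r >= 0} prod_j t_{k_j}^{a_j}.
   As a formal sum: t_k has z-adic valuation 3^k, so all terms with
   k_1 >= n+1 have valuation >= 3^(n+1) > n and do not contribute to the
   coefficient of z^n; hence that coefficient is the one of the partial
   sum over k_1 < n+1. Htilde [::] = 1. *)
Definition Htilde (a : seq nat) : series int := fun n => Gt a n.+1 n.

(* Main.v *)
Require Import Defs.
From HB Require Import structures.
From mathcomp Require Import all_boot all_order all_algebra.
Import GRing.Theory.
Local Open Scope ring_scope.
From mathcomp Require Import boolp ring zify.
From Stdlib Require Import FunctionalExtensionality.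
Set Implicit Arguments. Unset Strict Implicit. Unset Printing Implicit Defensive.

Section SR.
Variable R : comNzRingType.
Implicit Types f g h : series R.

Definition sadd f g : series R := fun n => f n + g n.
Definition sopp f : series R := fun n => - f n.
Definition szero : series R := fun _ => 0.

Lemma sext f g : (forall n, f n = g n) -> f = g.
Proof. by move=> H; apply: functional_extensionality. Qed.

Lemma saddA : associative sadd. Proof. by move=> f g h; apply: sext=> n; rewrite /sadd addrA. Qed.
Lemma saddC : commutative sadd. Proof. by move=> f g; apply: sext=> n; rewrite /sadd addrC. Qed.
Lemma sadd0 : left_id szero sadd. Proof. by move=> f; apply: sext=> n; rewrite /sadd add0r. Qed.
Lemma saddN : left_inverse szero sopp sadd. Proof. by move=> f; apply: sext=> n; rewrite /sadd /sopp addNr. Qed.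

HB.instance Definition _ := Choice.copy (series R) (nat -> R).
HB.instance Definition _ := GRing.isZmodule.Build (series R) saddA saddC sadd0 saddN.

Definition tr n f : {poly R} := \poly_(i < n.+1) f i.

Lemma coef_mul_agree n f g (P Q : {poly R}) :
  (forall i, (i <= n)%N -> P`_i = f i) -> (forall i, (i <= n)%N -> Q`_i = g i) ->
  forall k, (k <= n)%N -> (P * Q)`_k = sprod f g k.
Proof.
move=> HP HQ k kn; rewrite coefM /sprod; apply: eq_bigr => i _.
rewrite HP ?HQ //; last by apply: leq_trans (leq_ord i) kn.
by apply: leq_trans (leq_subr _ _) kn.
Qed.

Lemma tr_coef n f i : (i <= n)%N -> (tr n f)`_i = f i.
Proof. by move=> H; rewrite coef_poly ltnS H. Qed.

Lemma smulA : associative (@sprod R).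
Proof.
move=> f g h; apply: sext => n.
have Hfg := coef_mul_agree (@tr_coef n f) (@tr_coef n g).
have Hgh := coef_mul_agree (@tr_coef n g) (@tr_coef n h).
rewrite -(coef_mul_agree (tr_coef f) Hgh) // -(coef_mul_agree Hfg (tr_coef h)) //.
by rewrite mulrA.
Qed.

Lemma smulC : commutative (@sprod R).
Proof.
move=> f g; apply: sext => n.
rewrite -(coef_mul_agree (@tr_coef n f) (@tr_coef n g)) // -(coef_mul_agree (@tr_coef n g) (@tr_coef n f)) //.
by rewrite mulrC.
Qed.

Lemma tr_one n : forall i, (i <= n)%N -> (1 : {poly R})`_i = sone R i.
Proof. by move=> i _; rewrite coefC /sone; case: i. Qed.

Lemma smul1 : left_id (sone R) (@sprod R).
Proof.
move=> f; apply: sext => n.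
by rewrite -(coef_mul_agree (@tr_one n) (@tr_coef n f)) // mul1r tr_coef.
Qed.

Lemma smulDl : left_distributive (@sprod R) sadd.
Proof.
move=> f g h; apply: sext => n; rewrite /sprod /sadd -big_split /=.
by apply: eq_bigr => i _; rewrite mulrDl.
Qed.

Lemma sone_neq0 : sone R != szero.
Proof.
apply/eqP => H; have := congr1 (fun f => f 0%N) H; rewrite /sone /szero /=.
by move/eqP; rewrite oner_eq0.
Qed.

HB.instance Definition _ := GRing.Zmodule_isComNzRing.Build (series R) smulA smulC smul1 smulDl sone_neq0.

Lemma sprodE f g : sprod f g = f * g. Proof. by []. Qed.
Lemma soneE : sone R = 1. Proof. by []. Qed.
Lemma saddE f g n : (f + g) n = f n + g n. Proof. by []. Qed.
Lemma smulE f g n : (f * g) n = sprod f g n. Proof. by []. Qed.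

Notation S := (series R).

Lemma ssumE (I : Type) (r : seq I) (P : pred I) (F : I -> S) n :
  (\sum_(i <- r | P i) F i) n = \sum_(i <- r | P i) F i n.
Proof.
apply: (big_rec2 (fun (a : S) b => a n = b)) => // i a b _ <-.
by rewrite saddE.
Qed.

Lemma soppE (f : S) n : (- f) n = - f n. Proof. by []. Qed.
Lemma ssubE (f g : S) n : (f - g) n = f n - g n. Proof. by []. Qed.
Lemma s0E n : (0 : S) n = 0. Proof. by []. Qed.
Lemma sMnE (f : S) m n : (f *+ m) n = f n *+ m.
Proof. by elim: m => [|m IH]; rewrite ?mulr0n // !mulrS saddE IH. Qed.

Lemma spolyD p q : spoly (p + q) = spoly p + spoly q :> S.
Proof. by apply: sext => n; rewrite saddE /spoly coefD. Qed.
Lemma spolyM p q : spoly (p * q) = spoly p * spoly q :> S.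
Proof. by apply: sext => n; rewrite smulE /spoly coefM. Qed.
Lemma spoly1 : spoly 1 = 1 :> S.
Proof. by apply: sext => n; rewrite /spoly coefC /= -soneE /sone; case: n. Qed.
Lemma spoly0 : spoly 0 = 0 :> S.
Proof. by apply: sext => n; rewrite /spoly coef0. Qed.
Lemma spolyN p : spoly (- p) = - spoly p :> S.
Proof. by apply: sext => n; rewrite soppE /spoly coefN. Qed.
Lemma spolyB p q : spoly (p - q) = spoly p - spoly q :> S.
Proof. by rewrite spolyD spolyN. Qed.
Lemma spolyX p m : spoly (p ^+ m) = spoly p ^+ m :> S.
Proof. by elim: m => [|m IH]; rewrite ?expr0 ?spoly1 // !exprS spolyM IH. Qed.
Lemma spoly_nat m : spoly m%:R = m%:R :> S.
Proof. by elim: m => [|m IH]; rewrite ?spoly0 // !mulrS spolyD spoly1 IH. Qed.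

Lemma spowE (f : S) a : spow f a = f ^+ a.
Proof. by elim: a => [|a IH] //=; rewrite exprS -IH. Qed.

Definition z : S := spoly 'X.
Definition w : S := inv1pz R.

Lemma laurE c : laur c = spoly c.1 * w ^+ c.2.
Proof. by rewrite /laur spowE. Qed.

Lemma zmul (f : S) n : (z * f) n = if n is n'.+1 then f n' else 0.
Proof.
rewrite smulE /sprod big_ord_recl /= /z /spoly coefX /= mul0r add0r.
case: n => [|n]; first by rewrite big_ord0.
rewrite big_ord_recl /= coefX /= mul1r subn1 /=.
rewrite big1 ?addr0 // => i _; by rewrite coefX /= mul0r.
Qed.

Lemma zmulm (f : S) m n : (z ^+ m * f) n = if (m <= n)%N then f (n - m)%N else 0.
Proof.
elim: m n => [|m IH] n; first by rewrite expr0 mul1r subn0.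
by rewrite exprS -mulrA zmul; case: n => [|n] //=.
Qed.

Definition dz m (x : S) := exists y, x = z ^+ m * y.
Lemma dz_coef m x n : dz m x -> (n < m)%N -> x n = 0.
Proof. by move=> [y ->] H; rewrite zmulm leqNgt H. Qed.
Lemma dz_mulr m x y : dz m x -> dz m (x * y).
Proof. by move=> [u ->]; exists (u * y); rewrite mulrA. Qed.
Lemma dz_mull m x y : dz m x -> dz m (y * x).
Proof. by move=> H; rewrite mulrC; apply: dz_mulr. Qed.
Lemma dz_add m x y : dz m x -> dz m y -> dz m (x + y).
Proof. by move=> [u ->] [v ->]; exists (u + v); rewrite mulrDr. Qed.
Lemma dz0 m : dz m 0. Proof. by exists 0; rewrite mulr0. Qed.
Lemma dz_le m m' x : (m' <= m)%N -> dz m x -> dz m' x.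
Proof.
move=> H [u ->]; exists (z ^+ (m - m') * u).
by rewrite mulrA -exprD subnKC.
Qed.
Lemma dz_sum m (I : Type) (r : seq I) (P : pred I) (F : I -> S) :
  (forall i, P i -> dz m (F i)) -> dz m (\sum_(i <- r | P i) F i).
Proof.
move=> H; apply: (big_ind (dz m)); [exact: dz0 | exact: dz_add | exact: H].
Qed.

Lemma w1z : w * (1 + z) = 1.
Proof.
apply: sext => n; rewrite mulrDr mulr1 saddE mulrC zmul.
rewrite -soneE /sone /w /inv1pz.
case: n => [|n] /=; first by rewrite addr0.
by rewrite exprS mulN1r addNr.
Qed.

Definition Dser m : S := fun n => if (m %| n)%N then (-1) ^+ (n %/ m) else 0.

Lemma Dser_inv m : (0 < m)%N -> Dser m * (1 + z ^+ m) = 1.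
Proof.
move=> m0; apply: sext => n; rewrite mulrDr mulr1 saddE mulrC zmulm.
rewrite -soneE /sone /Dser.
case: n => [|n]; first by rewrite dvdn0 div0n expr0 leqNgt m0 addr0.
case: (leqP m n.+1) => Hm /=.
  have -> : (m %| n.+1 - m)%N = (m %| n.+1)%N by rewrite dvdn_subl.
  case: ifP => [Hd|_]; last by rewrite addr0.
  rewrite -{2}(mul1n m) divnBMl.
  have Hq : (0 < n.+1 %/ m)%N by rewrite divn_gt0.
  by rewrite -{1}(subnK Hq) addn1 exprS mulN1r addNr.
rewrite addr0; case: ifP => // Hd.
by have := dvdn_leq (ltn0Sn n) Hd; rewrite leqNgt Hm.
Qed.

End SR.


Section RD.
Variable R : comNzRingType.
Notation S := (series R).

Definition rd (f : series int) : S := fun n => (f n)%:~R.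

Lemma rdD f g : rd (f + g) = rd f + rd g.
Proof. by apply: sext => n; rewrite /rd !saddE intrD. Qed.
Lemma rd0 : rd 0 = 0.
Proof. by apply: sext => n; rewrite /rd. Qed.
Lemma rd_sum (I : Type) (r : seq I) (P : pred I) (F : I -> series int) :
  rd (\sum_(i <- r | P i) F i) = \sum_(i <- r | P i) rd (F i).
Proof. by apply: (big_morph rd rdD rd0). Qed.
Lemma rdM f g : rd (f * g) = rd f * rd g.
Proof.
apply: sext => n; rewrite /rd !smulE /sprod.
rewrite (big_morph (fun x : int => x%:~R : R) (@intrD R) (mulr0z 1)).
by apply: eq_bigr => i _; rewrite intrM.
Qed.
Lemma rd1 : rd 1 = 1.
Proof. by apply: sext => n; rewrite /rd -!soneE /sone; case: n. Qed.
Lemma rdX f a : rd (f ^+ a) = rd f ^+ a.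
Proof. by elim: a => [|a IH]; rewrite ?expr0 ?rd1 // !exprS rdM IH. Qed.

Definition t k : S := rd (tfac k).

Fixpoint GG (fs : seq {poly S}) (K : nat) : S :=
  if fs is f :: fs' then \sum_(k < K) f.[t k] * GG fs' k else 1.

Definition Full (fs : seq {poly S}) : S := fun n => GG fs n.+1 n.

Definition Xs (a : seq nat) : seq {poly S} := map (fun x => 'X^x) a.

Lemma rd_Gt a K : rd (Gt a K) = GG (Xs a) K.
Proof.
elim: a K => [|a1 a IH] K; first exact: rd1.
have -> : Gt (a1 :: a) K = \sum_(k < K) (tfac k ^+ a1 * Gt a k).
  by apply: sext => n; rewrite ssumE /=; apply: eq_bigr => k _; rewrite spowE.
rewrite rd_sum /=; apply: eq_bigr => k _.
by rewrite rdM rdX IH hornerXn.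
Qed.

Lemma Htilde_Full a : rd (Htilde a) = Full (Xs a).
Proof. by apply: sext => n; rewrite /Full -rd_Gt. Qed.

Lemma spolyXn m n : (spoly 'X^m : S) n = (n == m)%:R.
Proof. by rewrite /spoly coefXn. Qed.

Lemma zXn m : z R ^+ m = spoly 'X^m.
Proof. by rewrite /z -spolyX. Qed.

Lemma rd_tfac k : t k = (z R ^+ (3 ^ k) + z R ^+ (2 * 3 ^ k)) * Dser R (3 ^ k.+1).
Proof.
rewrite /t /tfac sprodE rdM; congr (_ * _); apply: sext => n.
  rewrite saddE !zXn !spolyXn /rd.
  by case: eqP => _; case: eqP => _; rewrite /= ?addr0 ?add0r ?mulr0n ?mulr1n ?intr0 ?intr1 //=; rewrite -[(1 + 1)%:R]/(2%:R) -natrD. 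
rewrite /rd /Dser; case: ifP => _ //; exact: intr_sign.
Qed.

Lemma t_rel k : t k * (1 + z R ^+ (3 ^ k.+1)) = z R ^+ (3 ^ k) + z R ^+ (2 * 3 ^ k).
Proof. by rewrite rd_tfac -mulrA Dser_inv ?mulr1 // expn_gt0. Qed.

Lemma t_cubic k : t k ^+ 3 = t k.+1 * (1 + 3%:R * t k - 3%:R * t k ^+ 3).
Proof.
set v := z R ^+ (3 ^ k).
have e2 : z R ^+ (2 * 3 ^ k) = v ^+ 2 by rewrite /v -exprM mulnC.
have e3 : z R ^+ (3 ^ k.+1) = v ^+ 3 by rewrite /v -exprM expnSr.
have e6 : z R ^+ (2 * 3 ^ k.+1) = v ^+ 6.
  by rewrite /v -exprM expnSr mulnC -mulnA.
have e9 : z R ^+ (3 ^ k.+2) = v ^+ 9 by rewrite /v -exprM !expnSr -mulnA.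
have hA : t k * (1 + v ^+ 3) = v + v ^+ 2 by rewrite -e3 -e2 t_rel.
have hB : t k.+1 * (1 + v ^+ 9) = v ^+ 3 + v ^+ 6 by rewrite -e3 -e6 -e9 t_rel.
have dA : Dser R (3 ^ k.+1) * (1 + v ^+ 3) = 1 by rewrite -e3 Dser_inv // expn_gt0.
have dB : Dser R (3 ^ k.+2) * (1 + v ^+ 9) = 1 by rewrite -e9 Dser_inv // expn_gt0.
set A := t k; set B := t k.+1; set DA := Dser R (3 ^ k.+1); set DB := Dser R (3 ^ k.+2).
apply/eqP; rewrite -subr_eq0; apply/eqP.
set E := _ - _.
have HE : E * ((1 + v ^+ 3) ^+ 3 * (1 + v ^+ 9)) =
   (A * (1 + v ^+ 3)) ^+ 3 * (1 + v ^+ 9) - (B * (1 + v ^+ 9)) *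
    ((1 + v ^+ 3) ^+ 3 + 3%:R * (A * (1 + v ^+ 3)) * (1 + v ^+ 3) ^+ 2
      - 3%:R * (A * (1 + v ^+ 3)) ^+ 3).
  by rewrite /E; ring.
rewrite hA hB in HE.
have H0 : E * ((1 + v ^+ 3) ^+ 3 * (1 + v ^+ 9)) = 0 by rewrite HE; ring.
have HV : ((1 + v ^+ 3) ^+ 3 * (1 + v ^+ 9)) * (DA ^+ 3 * DB) = 1.
  have -> : ((1 + v ^+ 3) ^+ 3 * (1 + v ^+ 9)) * (DA ^+ 3 * DB) =
    (DA * (1 + v ^+ 3)) ^+ 3 * (DB * (1 + v ^+ 9)) by ring.
  by rewrite dA dB expr1n mulr1.
have -> : E = E * (((1 + v ^+ 3) ^+ 3 * (1 + v ^+ 9)) * (DA ^+ 3 * DB)).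
  by rewrite HV mulr1.
by rewrite (mulrA E) H0 mul0r.
Qed.

End RD.


Section G.
Variable R : comNzRingType.
Notation S := (series R).
Variable gamma : nat.
Hypothesis h3 : (3 ^ gamma)%:R = 0 :> R.
Hypothesis gamma0 : (0 < gamma)%N.

Lemma three0 : (3%:R : S) ^+ gamma = 0.
Proof.
by rewrite -natrX -spoly_nat -polyC_natr h3 spoly0.
Qed.

Lemma geomS (x : S) n : (1 - x) * \sum_(j < n) x ^+ j = 1 - x ^+ n.
Proof. by rewrite -[1 - x]opprB mulNr -subrX1 opprB. Qed.

Definition Vp : {poly S} := 'X - 'X^3.
Definition Gp : {poly S} := \sum_(j < gamma) (- 3%:R * Vp) ^+ j.
Definition Qp : {poly S} := 'X^3 * Gp.

Lemma hornerNat (n : nat) (x : S) : (n%:R : {poly S}).[x] = (n%:R : series R).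
Proof. by rewrite -polyC_natr hornerC. Qed.

Lemma t_shift k : Qp.[t R k] = t R k.+1.
Proof.
set A := t R k; set B := t R k.+1; set y := A - A ^+ 3.
have HAB : A ^+ 3 = B * (1 - (- 3%:R * y)).
  by rewrite t_cubic /y /A /B; ring.
have HQ : Qp.[A] = A ^+ 3 * \sum_(j < gamma) (- 3%:R * y) ^+ j.
  rewrite /Qp /Gp hornerM hornerXn horner_sum; congr (_ * _).
  apply: eq_bigr => j _; rewrite horner_exp hornerM hornerN hornerNat.
  by rewrite /Vp hornerD hornerN hornerX hornerXn.
rewrite HQ HAB -mulrA.
have -> : (1 - - 3%:R * y) * \sum_(j < gamma) (- 3%:R * y) ^+ j = 1 - (- 3%:R * y) ^+ gamma.
  exact: geomS.
by rewrite exprMn exprNn three0 mulr0 mul0r subr0 mulr1.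
Qed.

Definition isA (x : S) := exists c : {poly R} * nat, x = laur c.

Lemma A_laur c : isA (laur c). Proof. by exists c. Qed.

Lemma keyw m m' : (1 + z R) ^+ m' * w R ^+ (m + m') = w R ^+ m.
Proof.
by rewrite exprD mulrCA -exprMn [(1 + z R) * _]mulrC w1z expr1n mulr1.
Qed.

Lemma A_add x y : isA x -> isA y -> isA (x + y).
Proof.
move=> [[p m] ->] [[q m'] ->].
exists (p * (1 + 'X) ^+ m' + q * (1 + 'X) ^+ m, (m + m')%N).
rewrite !laurE /= spolyD !spolyM !spolyX spolyD spoly1 -/(z R).
by rewrite mulrDl -!mulrA keyw addnC keyw.
Qed.

Lemma A_mul x y : isA x -> isA y -> isA (x * y).
Proof.
move=> [[p m] ->] [[q m'] ->]; exists (p * q, (m + m')%N).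
rewrite !laurE /= spolyM exprD; ring.
Qed.

Lemma A_poly p : isA (spoly p).
Proof. by exists (p, 0%N); rewrite laurE /= expr0 mulr1. Qed.

Lemma A_z : isA (z R). Proof. exact: A_poly. Qed.
Lemma A_w : isA (w R). Proof. by exists (1, 1%N); rewrite laurE /= spoly1 mul1r expr1. Qed.
Lemma A_nat m : isA (m%:R). Proof. by rewrite -spoly_nat; apply: A_poly. Qed.
Lemma A_0 : isA 0. Proof. exact: (A_nat 0). Qed.
Lemma A_1 : isA 1. Proof. exact: (A_nat 1). Qed.
Lemma A_N1 : isA (-1). Proof. by rewrite -spoly1 -spolyN; apply: A_poly. Qed.
Lemma A_opp x : isA x -> isA (- x).
Proof. by move=> H; rewrite -mulN1r; apply: A_mul => //; apply: A_N1. Qed.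
Lemma A_sub x y : isA x -> isA y -> isA (x - y).
Proof. by move=> Hx Hy; apply: A_add => //; apply: A_opp. Qed.
Lemma A_exp x m : isA x -> isA (x ^+ m).
Proof. by move=> Hx; elim: m => [|m IH]; [apply: A_1 | rewrite exprS; apply: A_mul]. Qed.
Lemma A_sum (I : Type) (r : seq I) (P : pred I) (F : I -> S) :
  (forall i, P i -> isA (F i)) -> isA (\sum_(i <- r | P i) F i).
Proof. by move=> H; apply: (big_ind isA); [apply: A_0 | apply: A_add | ]. Qed.

Lemma t0_A : isA (t R 0).
Proof.
set T := t R 0; set Z := z R; set W := w R.
have h1 : T * (1 + Z ^+ 3) = Z + Z ^+ 2.
  by have := t_rel R 0; rewrite expn0 expn1 muln1 expr1.
set y := 3%:R * Z * W ^+ 2.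
have hw : W * (1 + Z) = 1 by exact: w1z R.
have hTM : T * (1 - Z + Z ^+ 2) = Z.
  have -> : T * (1 - Z + Z ^+ 2) = W * (T * (1 + Z ^+ 3)) + T * (1 - Z + Z ^+ 2) * (1 - W * (1 + Z)).
    by ring.
  rewrite h1 hw subrr mulr0 addr0.
  have -> : W * (Z + Z ^+ 2) = Z * (W * (1 + Z)) by ring.
  by rewrite hw mulr1.
have hMW : (1 - Z + Z ^+ 2) * W ^+ 2 = 1 - y.
  have -> : (1 - Z + Z ^+ 2) * W ^+ 2 = 1 - y + ((W * (1 + Z)) ^+ 2 - 1) by rewrite /y; ring.
  by rewrite hw expr1n subrr addr0.
have hS : (1 - y) * \sum_(j < gamma) y ^+ j = 1.
  by rewrite geomS /y !exprMn three0 !mul0r subr0.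
have -> : T = Z * W ^+ 2 * \sum_(j < gamma) y ^+ j.
  have -> : Z * W ^+ 2 * \sum_(j < gamma) y ^+ j
       = T * (1 - Z + Z ^+ 2) * W ^+ 2 * \sum_(j < gamma) y ^+ j by rewrite hTM.
  have -> : T * (1 - Z + Z ^+ 2) * W ^+ 2 * \sum_(j < gamma) y ^+ j
     = T * (((1 - Z + Z ^+ 2) * W ^+ 2) * \sum_(j < gamma) y ^+ j) by ring.
  by rewrite hMW hS mulr1.
apply: A_mul; first by apply: A_mul; [apply: A_z | apply: A_exp; apply: A_w].
apply: A_sum => j _; apply: A_exp; apply: A_mul; last by apply: A_exp; apply: A_w.
by apply: A_mul; [apply: A_nat | apply: A_z].
Qed.

End G.


Section Chain.
Variable R : comNzRingType.
Notation S := (series R).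
Variable gamma : nat.
Hypothesis h3 : (3 ^ gamma)%:R = 0 :> R.
Notation tt := (t R).
Notation Qp := (Qp R gamma).

Lemma sum3 (a x y u : nat -> S) K :
  \sum_(k < K) a k * (x k - y k - (3%:R : S) * u k) =
  \sum_(k < K) a k * x k - \sum_(k < K) a k * y k - (3%:R : S) * \sum_(k < K) a k * u k.
Proof. by rewrite mulr_sumr -!sumrB; apply: eq_bigr => k _; ring. Qed.

Lemma GG_S f fs K : GG (f :: fs) K.+1 = GG (f :: fs) K + f.[tt K] * GG fs K.
Proof. by rewrite /= big_ord_recr. Qed.

Variable c : nat.
Variable Sc : {poly S}.
Hypothesis hS : 'X^(3 * c) = Qp ^+ c - 3%:R * Sc.

Lemma evX3 k : ('X^(3 * c) : {poly S}).[tt k] = tt k.+1 ^+ c - (3%:R : S) * Sc.[tt k].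
Proof.
by rewrite hS hornerD hornerN hornerM hornerNat horner_exp (t_shift h3).
Qed.

Lemma base_nil K :
  GG [:: 'X^(3 * c)] K = GG [:: 'X^c] K.+1 - tt 0 ^+ c - (3%:R : S) * GG [:: Sc] K.
Proof.
rewrite /= big_ord_recl /= hornerXn mulr1.
have -> : \sum_(i < K) ('X^(3 * c)).[tt i] * 1 =
  \sum_(i < K) (tt i.+1 ^+ c * 1 - (3%:R : S) * (Sc.[tt i] * 1)).
  by apply: eq_bigr => i _; rewrite evX3 !mulr1.
rewrite sumrB -mulr_sumr.
have -> : \sum_(i < K) tt i.+1 ^+ c * 1 = \sum_(i < K) ('X^c).[tt (bump 0 i)] * 1.
  by apply: eq_bigr => i _; rewrite hornerXn.
ring.
Qed.

Lemma GG_cons (f : {poly S}) fs K : GG (f :: fs) K = \sum_(k < K) f.[tt k] * GG fs k.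
Proof. by []. Qed.
Lemma GG_cons0 (f : {poly S}) fs : GG (f :: fs) 0 = 0.
Proof. by rewrite GG_cons big_ord0. Qed.

Lemma base_cons f suf K :
  GG ('X^(3 * c) :: f :: suf) K =
  GG ('X^c :: f :: suf) K.+1 - GG ((Qp ^+ c * f) :: suf) K
    - (3%:R : S) * GG (Sc :: f :: suf) K.
Proof.
rewrite (GG_cons 'X^c) big_ord_recl GG_cons0 mulr0 add0r.
have -> : \sum_(i < K) ('X^c).[tt (bump 0 i)] * GG (f :: suf) (bump 0 i) =
   \sum_(i < K) (tt i.+1 ^+ c * GG (f :: suf) i + (Qp ^+ c * f).[tt i] * GG suf i).
  apply: eq_bigr => i _; rewrite /bump leq0n add1n GG_S hornerXn.
  by rewrite hornerM horner_exp (t_shift h3) mulrDr mulrA.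
rewrite (GG_cons 'X^(3 * c)) (GG_cons (Qp ^+ c * f)) (GG_cons Sc).
have E : forall i : nat, ('X^(3 * c)).[tt i] * GG (f :: suf) i =
    (tt i.+1 ^+ c * GG (f :: suf) i - (3%:R : S) * (Sc.[tt i] * GG (f :: suf) i) : S).
  by move=> i; rewrite evX3; ring.
have -> : \sum_(i < K) ('X^(3 * c)).[tt i] * GG (f :: suf) i =
  \sum_(i < K) (tt i.+1 ^+ c * GG (f :: suf) i - (3%:R : S) * (Sc.[tt i] * GG (f :: suf) i)).
  by apply: eq_bigr => i _; apply: E.
rewrite sumrB -mulr_sumr big_split /=; ring.
Qed.

Fixpoint Sh (pre tail : seq {poly S}) (K : nat) : S :=
  if pre is g :: pre' then \sum_(k < K) g.[tt k] * Sh pre' tail k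
  else GG tail K.+1.

Lemma gen_nil pre K :
  GG (pre ++ [:: 'X^(3 * c)]) K =
  Sh pre [:: 'X^c] K - tt 0 ^+ c * GG pre K - (3%:R : S) * GG (pre ++ [:: Sc]) K.
Proof.
elim: pre K => [|g pre IH] K; first by rewrite base_nil /= mulr1.
rewrite cat_cons GG_cons (eq_bigr (fun k : 'I_K => g.[tt k] * (Sh pre [:: 'X^c] k
   - tt 0 ^+ c * GG pre k - (3%:R : S) * GG (pre ++ [:: Sc]) k))); last by move=> k _; rewrite IH.
rewrite (sum3 (fun k => g.[tt k]) (fun k => Sh pre [:: 'X^c] k) (fun k => tt 0 ^+ c * GG pre k)
   (fun k => GG (pre ++ [:: Sc]) k)).
rewrite cat_cons (GG_cons g pre) mulr_sumr; congr (_ - _ - _); try by [].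
by rewrite mulr_sumr; apply: eq_bigr => k _; rewrite mulrCA.
Qed.

Lemma gen_cons f suf pre K :
  GG (pre ++ 'X^(3 * c) :: f :: suf) K =
  Sh pre ('X^c :: f :: suf) K - GG (pre ++ (Qp ^+ c * f) :: suf) K
    - (3%:R : S) * GG (pre ++ Sc :: f :: suf) K.
Proof.
elim: pre K => [|g pre IH] K; first by rewrite base_cons.
rewrite cat_cons GG_cons (eq_bigr (fun k : 'I_K => g.[tt k] * (Sh pre ('X^c :: f :: suf) k
   - GG (pre ++ (Qp ^+ c * f) :: suf) k - (3%:R : S) * GG (pre ++ Sc :: f :: suf) k)));
  last by move=> k _; rewrite IH.
by rewrite (sum3 (fun k => g.[tt k]) (fun k => Sh pre ('X^c :: f :: suf) k)
   (fun k => GG (pre ++ (Qp ^+ c * f) :: suf) k) (fun k => GG (pre ++ Sc :: f :: suf) k)).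
Qed.

Lemma Sh_rcons suf pre g K :
  Sh (rcons pre g) ('X^c :: suf) K =
  GG (rcons pre g ++ 'X^c :: suf) K + GG (pre ++ (g * 'X^c) :: suf) K.
Proof.
elim: pre K => [|h pre IH] K /=.
  rewrite -big_split /=; apply: eq_bigr => k _.
  by rewrite big_ord_recr /= hornerM hornerXn; ring.
rewrite -big_split /=; apply: eq_bigr => k _.
by rewrite IH mulrDr.
Qed.

End Chain.


Section Stab.
Variable R : comNzRingType.
Notation S := (series R).
Notation tt := (t R).

Definition pA (p : {poly S}) := forall i, isA p`_i.
Definition slot (p : {poly S}) := p`_0 = 0 /\ pA p.
Fixpoint slots (fs : seq {poly S}) : Prop :=
  if fs is p :: fs' then slot p /\ slots fs' else True.

Lemma slots_cat f1 f2 : slots (f1 ++ f2) <-> slots f1 /\ slots f2.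
Proof. elim: f1 => [|p f1 IH] /=; first by intuition. by rewrite IH; intuition. Qed.

Lemma slots_rcons f p : slots (rcons f p) <-> slots f /\ slot p.
Proof. by rewrite -cats1 slots_cat /=; intuition. Qed.

Lemma t_dz k : dz (3 ^ k) (tt k).
Proof.
rewrite rd_tfac; exists ((1 + z R ^+ (3 ^ k)) * Dser R (3 ^ k.+1)).
by rewrite mulrA mulrDr mulr1 -exprD mul2n -addnn.
Qed.

Lemma ev_dz (p : {poly S}) x m : p`_0 = 0 -> dz m x -> dz m p.[x].
Proof.
move=> p0 hx; rewrite horner_coef; apply: dz_sum => -[[|i] Hi] _ /=.
  by rewrite p0 mul0r; apply: dz0.
by rewrite exprS; apply: dz_mull; apply: dz_mulr.
Qed.

Lemma GG_stab fs n K : slots fs -> (n < K)%N -> GG fs K n = GG fs n.+1 n.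
Proof.
case: fs => [|f fs] // [[f0 _] _] hK.
have H : forall m, GG (f :: fs) (n.+1 + m) n = GG (f :: fs) n.+1 n.
  elim=> [|m IH]; first by rewrite addn0.
  rewrite addnS GG_S saddE IH [X in _ + X](@dz_coef _ (3 ^ (n.+1 + m))) ?addr0 //.
    by apply: dz_mulr; apply: ev_dz => //; apply: t_dz.
  apply: (@leq_trans (n.+1 + m)); first exact: leq_addr.
  by apply: ltnW; apply: ltn_expl.
by rewrite -(subnKC hK) H.
Qed.

Lemma Full_GG fs n K : slots fs -> (n < K)%N -> GG fs K n = Full fs n.
Proof. exact: GG_stab. Qed.

Lemma Full_prod (x : S) fs K n : slots fs -> (n < K)%N -> (x * GG fs K) n = (x * Full fs) n.
Proof.
move=> hs hK; rewrite !smulE /sprod; apply: eq_bigr => i _; congr (_ * _).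
apply: Full_GG => //; apply: leq_ltn_trans hK; exact: leq_subr.
Qed.

Definition ShF pre tail : S := fun n => Sh pre tail n.+1 n.

Lemma ShF_nil tail : slots tail -> ShF [::] tail = Full tail.
Proof. by move=> hs; apply: sext => n; rewrite /ShF /= Full_GG. Qed.

Lemma ShF_rcons (c : nat) suf pre g :
  ShF (rcons pre g) ('X^c :: suf) =
  Full (rcons pre g ++ 'X^c :: suf) + Full (pre ++ (g * 'X^c) :: suf).
Proof. by apply: sext => n; rewrite /ShF Sh_rcons. Qed.

Variable gamma : nat.
Hypothesis h3 : (3 ^ gamma)%:R = 0 :> R.
Notation Qp := (Qp R gamma).
Variable c : nat.
Variable Sc : {poly S}.
Hypothesis hS : 'X^(3 * c) = Qp ^+ c - 3%:R * Sc.
Hypothesis hSc : slot Sc.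

Lemma Full_nil pre : slots pre ->
  Full (pre ++ [:: 'X^(3 * c)]) =
  ShF pre [:: 'X^c] - tt 0 ^+ c * Full pre - (3%:R : S) * Full (pre ++ [:: Sc]).
Proof.
move=> hp; apply: sext => n; rewrite /Full (gen_nil h3 hS) !ssubE.
rewrite !(@Full_prod _ _ n.+1) //; apply/slots_cat; split => //=.
Qed.

Lemma Full_cons pre f suf : slots pre -> slot (Qp ^+ c * f) -> slots (f :: suf) ->
  Full (pre ++ 'X^(3 * c) :: f :: suf) =
  ShF pre ('X^c :: f :: suf) - Full (pre ++ (Qp ^+ c * f) :: suf)
    - (3%:R : S) * Full (pre ++ Sc :: f :: suf).
Proof.
move=> hp hq hf; apply: sext => n; rewrite /Full (gen_cons h3 hS) !ssubE.
rewrite !(@Full_prod _ _ n.+1) //; apply/slots_cat; split => //=.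
Qed.

End Stab.


Section PA.
Variable R : comNzRingType.
Notation S := (series R).
Implicit Types p q : {poly S}.

Lemma pA_add p q : pA p -> pA q -> pA (p + q).
Proof. by move=> hp hq i; rewrite coefD; apply: A_add. Qed.
Lemma pA_opp p : pA p -> pA (- p).
Proof. by move=> hp i; rewrite coefN; apply: A_opp. Qed.
Lemma pA_mul p q : pA p -> pA q -> pA (p * q).
Proof. by move=> hp hq i; rewrite coefM; apply: A_sum => j _; apply: A_mul. Qed.
Lemma pA_C (a : S) : isA a -> pA a%:P.
Proof. by move=> ha i; rewrite coefC; case: eqP => _ //; apply: A_0. Qed.
Lemma pA_nat m : pA (m%:R : {poly S}).
Proof. by rewrite -polyC_natr; apply: pA_C; apply: A_nat. Qed.
Lemma pA_1 : pA (1 : {poly S}). Proof. exact: (pA_nat 1). Qed.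
Lemma pA_X : pA ('X : {poly S}). Proof. by move=> i; rewrite coefX; apply: A_nat. Qed.
Lemma pA_Xn m : pA ('X^m : {poly S}). Proof. by move=> i; rewrite coefXn; apply: A_nat. Qed.
Lemma pA_exp p m : pA p -> pA (p ^+ m).
Proof. by move=> hp; elim: m => [|m IH]; [apply: pA_1 | rewrite exprS; apply: pA_mul]. Qed.
Lemma pA_sum (I : Type) (r : seq I) (P : pred I) (F : I -> {poly S}) :
  (forall i, P i -> pA (F i)) -> pA (\sum_(i <- r | P i) F i).
Proof.
move=> H; elim/big_rec: _ => [|i x Pi hx]; first exact: (pA_nat 0).
by apply: pA_add => //; apply: H.
Qed.

Lemma slot_Xn m : (0 < m)%N -> slot ('X^m : {poly S}).
Proof. by move=> hm; split; [rewrite coefXn eq_sym eqn0Ngt hm | apply: pA_Xn]. Qed.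

Lemma slot_XnM m p : (0 < m)%N -> pA p -> slot ('X^m * p : {poly S}).
Proof. by move=> hm hp; split; [rewrite coefXnM hm | apply: pA_mul => //; apply: pA_Xn]. Qed.

Lemma slots_Xs a : all (fun x => 0 < x)%N a -> slots (Xs R a).
Proof. by elim: a => [|x a IH] //= /andP [hx ha]; split; [apply: slot_Xn | apply: IH]. Qed.

Variable gamma : nat.
Hypothesis gamma0 : (0 < gamma)%N.

Lemma pA_Vp : pA (Vp R). Proof. by apply: pA_add; [apply: pA_X | apply: pA_opp; apply: pA_Xn]. Qed.
Lemma pA_Gp : pA (Gp R gamma).
Proof.
apply: pA_sum => j _; apply: pA_exp; apply: pA_mul; last exact: pA_Vp.
by apply: pA_opp; apply: pA_nat.
Qed.
Lemma pA_Qp : pA (Qp R gamma). Proof. by apply: pA_mul; [apply: pA_Xn | apply: pA_Gp]. Qed.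

Definition Wp : {poly S} := - Vp R * \sum_(j < gamma.-1) (- 3%:R * Vp R) ^+ j.
Lemma pA_Wp : pA Wp.
Proof.
apply: pA_mul; first by apply: pA_opp; apply: pA_Vp.
apply: pA_sum => j _; apply: pA_exp; apply: pA_mul; last exact: pA_Vp.
by apply: pA_opp; apply: pA_nat.
Qed.

Lemma Gp_W : Gp R gamma = 1 + 3%:R * Wp.
Proof.
rewrite /Gp /Wp -(prednK gamma0) big_ord_recl expr0 /=.
congr (_ + _); rewrite mulrA mulrN -mulNr mulr_sumr; apply: eq_bigr => j _.
by rewrite /bump leq0n add1n exprS.
Qed.

Definition Scp (c : nat) : {poly S} :=
  'X^(3 * c) * (Wp * \sum_(i < c) (Gp R gamma) ^+ i).

Lemma hScp c : 'X^(3 * c) = (Qp R gamma) ^+ c - 3%:R * Scp c.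
Proof.
rewrite /Qp /Scp exprMn -exprM.
have -> : (Gp R gamma) ^+ c = 1 + (Gp R gamma - 1) * \sum_(i < c) (Gp R gamma) ^+ i.
  by rewrite -subrX1 addrC subrK.
have hG : Gp R gamma - 1 = 3%:R * Wp by rewrite Gp_W addrAC subrr add0r.
rewrite hG.
move: ('X^(3 * c)) (\sum_(i < c) (Gp R gamma) ^+ i) => x y.
ring.
Qed.

Lemma slot_Scp c : (0 < c)%N -> slot (Scp c).
Proof.
move=> hc; apply: slot_XnM; first by rewrite muln_gt0.
by apply: pA_mul; [apply: pA_Wp | apply: pA_sum => i _; apply: pA_exp; apply: pA_Gp].
Qed.

Lemma slot_QX c b : (0 < b)%N -> slot ((Qp R gamma) ^+ c * 'X^b).
Proof. by move=> hb; rewrite mulrC; apply: slot_XnM => //; apply: pA_exp; apply: pA_Qp. Qed.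

End PA.


Section Lin.
Variable R : comNzRingType.
Notation S := (series R).
Notation tt := (t R).

Lemma GG_lin pre (p : {poly S}) suf K :
  GG (pre ++ p :: suf) K = \sum_(i < size p) p`_i * GG (pre ++ 'X^i :: suf) K.
Proof.
elim: pre K => [|g pre IH] K /=.
  under eq_bigr => k _ do rewrite horner_coef mulr_suml.
  rewrite exchange_big; apply: eq_bigr => i _; rewrite mulr_sumr.
  by apply: eq_bigr => k _; rewrite hornerXn mulrA.
under eq_bigr => k _ do rewrite IH mulr_sumr.
rewrite exchange_big; apply: eq_bigr => i _; rewrite mulr_sumr.
by apply: eq_bigr => k _; rewrite mulrCA.
Qed.

Lemma Full_lin pre (p : {poly S}) suf : slots pre -> slots suf -> p`_0 = 0 ->
  Full (pre ++ p :: suf) = \sum_(i < size p) p`_i * Full (pre ++ 'X^i :: suf).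
Proof.
move=> hp hs p0; apply: sext => n; rewrite /Full GG_lin !ssumE; apply: eq_bigr => -[[|i] Hi] _ /=.
  by rewrite p0 !mul0r.
rewrite (@Full_prod _ _ _ n.+1) //; apply/slots_cat; split => //=; split => //.
exact: slot_Xn.
Qed.

Definition good (a : seq nat) := (a != [::]) && all (fun x => (0 < x)%N && ~~ (3 %| x)%N) a.

Definition Span (x : S) := exists (c0 : {poly R} * nat) (L : seq (({poly R} * nat) * seq nat)),
  all (fun t => good t.2) L /\ x = laur c0 + \sum_(t <- L) laur t.1 * rd R (Htilde t.2).

Definition lmul (c c' : {poly R} * nat) := (c.1 * c'.1, (c.2 + c'.2)%N).
Lemma lmulE c c' : laur c * laur c' = laur (lmul c c') :> S.
Proof. by rewrite !laurE /= spolyM exprD; ring. Qed.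

Lemma Span_A x : isA x -> Span x.
Proof. by move=> [c ->]; exists c, [::]; rewrite big_nil addr0. Qed.

Lemma Span_add x y : Span x -> Span y -> Span (x + y).
Proof.
move=> [c1 [L1 [h1 ->]]] [c2 [L2 [h2 ->]]].
have [c3 h3] := A_add (A_laur c1) (A_laur c2).
exists c3, (L1 ++ L2); split; first by rewrite all_cat h1 h2.
by rewrite big_cat /= -h3; ring.
Qed.

Lemma Span_mulA l x : isA l -> Span x -> Span (l * x).
Proof.
move=> [cl ->] [c0 [L [h ->]]].
exists (lmul cl c0), (map (fun t => (lmul cl t.1, t.2)) L); split.
  by rewrite all_map.
rewrite mulrDr lmulE big_map mulr_sumr; congr (_ + _).
by apply: eq_bigr => t _; rewrite mulrA lmulE.
Qed.

Lemma Span_H a : good a -> Span (rd R (Htilde a)).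
Proof.
move=> ha; exists (0, 0%N), [:: ((1, 0%N), a)]; split; first by rewrite /= ha.
rewrite big_cons big_nil !laurE /= spoly0 spoly1 expr0 !mul0r add0r; ring.
Qed.

Lemma Span_0 : Span 0. Proof. exact: Span_A (A_0 R). Qed.
Lemma Span_opp x : Span x -> Span (- x).
Proof. by move=> h; rewrite -mulN1r; apply: Span_mulA => //; apply: A_N1. Qed.
Lemma Span_sub x y : Span x -> Span y -> Span (x - y).
Proof. by move=> hx hy; apply: Span_add => //; apply: Span_opp. Qed.
Lemma Span_sum (I : Type) (r : seq I) (P : pred I) (F : I -> S) :
  (forall i, P i -> Span (F i)) -> Span (\sum_(i <- r | P i) F i).
Proof.
move=> H; elim/big_rec: _ => [|i x Pi hx]; first exact: Span_0.
by apply: Span_add => //; apply: H.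
Qed.

End Lin.


Section Main.
Variable R : comNzRingType.
Notation S := (series R).
Notation tt := (t R).
Variable gamma : nat.
Hypothesis h3 : (3 ^ gamma)%:R = 0 :> R.
Hypothesis gamma0 : (0 < gamma)%N.
Notation three := (3%:R : S).

Definition P e fs := Span (three ^+ e * Full fs).

Lemma A_three e : isA (three ^+ e). Proof. by apply: A_exp; apply: A_nat. Qed.

Lemma P_zero e fs : (gamma <= e)%N -> P e fs.
Proof.
move=> he; rewrite /P -(subnKC he) exprD (three0 h3) !mul0r; exact: Span_0.
Qed.

Lemma lift e r : (forall a, size a = r -> all (fun x => 0 < x)%N a -> P e (Xs R a)) ->
  forall fs, size fs = r -> slots fs -> P e fs.
Proof.
move=> Hm.
suff H : forall suf a, (size a + size suf = r)%N -> all (fun x => 0 < x)%N a -> slots suf ->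
   P e (Xs R a ++ suf).
  by move=> fs hs hf; apply: (H fs [::]).
elim=> [|p suf IH] a hsz ha hs.
  by rewrite cats0; apply: Hm => //; rewrite addn0 in hsz.
case: hs => [[p0 pAp] hs].
rewrite /P (Full_lin (slots_Xs R ha) hs p0) mulr_sumr; apply: Span_sum => -[[|i] Hi] _ /=.
  by rewrite p0 mul0r mulr0; apply: Span_0.
rewrite mulrCA; apply: Span_mulA => //.
have -> : Xs R a ++ 'X^(i.+1) :: suf = Xs R (rcons a i.+1) ++ suf.
  by rewrite /Xs map_rcons cat_rcons.
apply: IH => //.
  by rewrite size_rcons -hsz /=; lia.
by rewrite all_rcons /= ha.
Qed.

Lemma Full_nil0 : Full [::] = 1 :> S.
Proof. by apply: sext. Qed.

Lemma mono e r (He1 : forall fs, slots fs -> P e.+1 fs)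
  (Hr : forall fs, (size fs < r)%N -> slots fs -> P e fs) :
  forall a, size a = r -> all (fun x => 0 < x)%N a -> P e (Xs R a).
Proof.
move=> a; have [s] := ubnP (sumn a); elim: s a => // s IHs a hsa hsz ha.
case: (boolP (has (fun x => 3 %| x)%N a)) => [hh | hn].
- move/hasP: hh => [x xa x3]; move: hsa hsz ha; case/splitPr: xa => a1 a2 hsa hsz ha.
  have hx0 : (0 < x)%N by move: ha; rewrite all_cat /= => /and3P [_ hx _].
  set c := (x %/ 3)%N; have hx : x = (3 * c)%N by rewrite mulnC divnK.
  have hc : (0 < c)%N by move: hx0; rewrite hx muln_gt0 => /andP [].
  have ha1 : all (fun x => 0 < x)%N a1 by move: ha; rewrite all_cat => /andP [].
  have ha2 : all (fun x => 0 < x)%N a2 by move: ha; rewrite all_cat /= => /and3P [].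
  have hSc := slot_Scp R gamma hc.
  have HSh : Span (three ^+ e * ShF (Xs R a1) ('X^c :: Xs R a2)).
    case/lastP: a1 hsa hsz ha ha1 => [|a1' b0] hsa hsz ha ha1.
      rewrite ShF_nil /=; last by split; [apply: slot_Xn | apply: slots_Xs].
      have -> : 'X^c :: Xs R a2 = Xs R (c :: a2) by [].
      apply: IHs => //=; last by rewrite hc ha2.
      by move: hsa; rewrite /= hx; lia.
    rewrite /Xs map_rcons ShF_rcons mulrDr; apply: Span_add.
      have -> : rcons [seq 'X^x | x <- a1'] 'X^b0 ++ 'X^c :: [seq 'X^x | x <- a2]
          = Xs R (rcons a1' b0 ++ c :: a2) by rewrite /Xs map_cat map_rcons.
      apply: IHs.
          by move: hsa; rewrite !sumn_cat sumn_rcons /= hx; lia.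
        by move: hsz; rewrite !size_cat size_rcons.
      by rewrite all_cat ha1 /= hc ha2.
    have -> : [seq 'X^x | x <- a1'] ++ ('X^b0 * 'X^c) :: [seq 'X^x | x <- a2]
          = Xs R (a1' ++ (b0 + c)%N :: a2) by rewrite /Xs map_cat /= exprD.
    apply: Hr.
      by rewrite /Xs size_map size_cat -hsz size_cat size_rcons /=; lia.
    apply: slots_Xs; move: ha1; rewrite all_rcons => /andP [hb0 ha1'].
    by rewrite all_cat ha1' /= ha2 addn_gt0 hc orbT.
  case: a2 ha ha2 hsa hsz HSh => [|b a2'] ha ha2 hsa hsz HSh.
  + rewrite /P /Xs map_cat /= hx (Full_nil h3 (hScp R gamma0 c) hSc); last exact: slots_Xs.
    rewrite !mulrBr; apply: Span_sub; first apply: Span_sub => //.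
      rewrite mulrCA; apply: Span_mulA; first by apply: A_exp; apply: (t0_A h3).
      apply: Hr; last exact: slots_Xs.
      by rewrite /Xs size_map -hsz size_cat /=; lia.
    rewrite mulrA -exprSr; apply: He1; apply/slots_cat; split; first exact: slots_Xs.
    by split.
  + have hb : (0 < b)%N by move: ha2 => /andP [].
    have hs2 : slots ('X^b :: Xs R a2') by split; [apply: slot_Xn | apply: slots_Xs; case/andP: ha2].
    rewrite /P /Xs map_cat /= hx (Full_cons h3 (hScp R gamma0 c) hSc); first last.
    * exact: hs2.
    * exact: slot_QX.
    * exact: slots_Xs.
    rewrite !mulrBr; apply: Span_sub; first apply: Span_sub => //.
      apply: Hr.
        by rewrite size_cat /= size_map -hsz size_cat /= size_map; lia.
      apply/slots_cat; split; first exact: slots_Xs.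
      by split; [apply: slot_QX | apply: slots_Xs; case/andP: ha2].
    rewrite mulrA -exprSr; apply: He1; apply/slots_cat; split; first exact: slots_Xs.
    by split.
- case: a hsa hsz ha hn => [|x a] hsa hsz ha hn.
    rewrite /P Full_nil0 mulr1; apply: Span_A; exact: A_three.
  rewrite /P -Htilde_Full; apply: Span_mulA; first exact: A_three.
  apply: Span_H; rewrite /good; apply/andP; split => //; apply/allP => y yin.
  rewrite (allP ha y yin) /=; exact: (hasPn hn y yin).
Qed.

Lemma claim d : forall e, (gamma <= e + d)%N -> forall fs, slots fs -> P e fs.
Proof.
elim: d => [|d IHd] e hed fs hs.
  by apply: P_zero; rewrite addn0 in hed.
have He1 : forall fs, slots fs -> P e.+1 fs by apply: IHd; rewrite addSnnS.
have [r] := ubnP (size fs); elim: r fs hs => // r IHr fs hs hr.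
apply: (@lift e (size fs)) => // a ha hpa.
apply: (@mono e (size fs) He1) => // fs' hfs' hs'.
by apply: IHr => //; apply: leq_trans hfs' _; rewrite -ltnS.
Qed.

End Main.


Unset Implicit Arguments. Set Strict Implicit. Set Printing Implicit Defensive.

Theorem lemma2p9 (b : seq nat) (gamma : nat) :
  all (fun x => 0 < x)%N b -> (0 < gamma)%N ->
  exists (c0 : {poly 'Z_(3 ^ gamma)} * nat)
         (L : seq (({poly 'Z_(3 ^ gamma)} * nat) * seq nat)),
    all (fun t => (t.2 != [::]) && all (fun x => (0 < x)%N && ~~ (3 %| x)%N) t.2) L /\
    forall n : nat,
      red gamma (Htilde b) n
      = laur c0 n + \sum_(t <- L) sprod (laur t.1) (red gamma (Htilde t.2)) n.
Proof.
move=> hb g0.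
have h3 : (3 ^ gamma)%:R = 0 :> 'Z_(3 ^ gamma).
  by apply: pchar_Zp; rewrite -(expn0 3) ltn_exp2l.
have := @claim _ gamma h3 g0 gamma 0 (leqnn _) (Xs _ b) (slots_Xs _ hb).
rewrite /P expr0 mul1r -Htilde_Full => -[c0 [L [hL hE]]].
exists c0, L; split; first exact: hL.
move=> n; have := congr1 (fun f => f n) hE; rewrite saddE ssumE => hE'.
exact: hE'.
Qed.
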